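(* Consider classical propositional logic over a set $V$ of propositional variables, and suppose that for every disjoint cover $X',X''$ of $V$, the relation $\preceq$ on $(\Pi V\times\Pi V)\cup(\Pi X'\times\Pi X')\cup(\Pi X''\times\Pi X'')$ is a smooth (generalized) Hamming relation. Define $\beta\mathrel{|\!\sim}\gamma$ iff $\mu(M(\beta))\subseteq M(\gamma)$. Then for all formulas $\phi,\psi$ with $\phi\mathrel{|\!\sim}\psi$ there is a formula $\alpha$ with $var(\alpha)\subseteq var(\phi)\cap var(\psi)$ such that $\phi\vdash\alpha$ and $\alpha\mathrel{|\!\sim}\psi$.
   Context: For $Y\subseteq V$, $\Pi Y$ is the set of assignments $Y\to\{\mathrm{TRUE},\mathrm{FALSE}\}$; $M(\phi)\subseteq\Pi V$ is the set of models of $\phi$; $var(\phi)$ is the set of variables occurring in $\phi$. For $\sigma\in\Pi V$ write $\sigma=\sigma'\circ\sigma''$ with $\sigma'=\sigma\upharpoonright X'$, $\sigma''=\sigma\upharpoonright X''$. $\preceq$ is a (generalized) Hamming relation for the cover $X',X''$ iff $\preceq$ is reflexive and for all $\sigma,\tau\in\Pi V$: $\sigma\preceq\tau\iff(\sigma'\preceq\tau'$ and $\sigma''\preceq\tau'')$. $x\prec y$ means $x\preceq y$ and $x\neq y$. For a set $A$ of (partial) models, $\mu(A):=\{x\in A:\neg\exists x'\in A.\,x'\prec x\}$; $\preceq$ is smooth iff for every such $A$ and $x\in A-\mu(A)$ there is $x'\in\mu(A)$ with $x'\prec x$. *)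

(* Defs.v *)
From Stdlib Require Import Classical.

Set Implicit Arguments.

Inductive form (V : Type) : Type :=
| FVar : V -> form V
| FTop : form V
| FBot : form V
| FNeg : form V -> form V
| FAnd : form V -> form V -> form V
| FOr  : form V -> form V -> form V
| FImp : form V -> form V -> form V.

Arguments FTop {V}.
Arguments FBot {V}.

Definition model (V : Type) := V -> bool.

Fixpoint sat (V : Type) (s : model V) (f : form V) : Prop :=
  match f with
  | FVar v => s v = true
  | FTop => True
  | FBot => False
  | FNeg g => ~ sat s g
  | FAnd g h => sat s g /\ sat s h
  | FOr g h => sat s g \/ sat s h
  | FImp g h => sat s g -> sat s h
  end.

Definition Mod (V : Type) (f : form V) : model V -> Prop := fun s => sat s f.

Fixpoint occurs (V : Type) (v : V) (f : form V) : Prop :=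
  match f with
  | FVar w => w = v
  | FTop | FBot => False
  | FNeg g => occurs v g
  | FAnd g h | FOr g h | FImp g h => occurs v g \/ occurs v h
  end.

(* Classical consequence phi |- alpha (semantic, via completeness). *)
Definition entails (V : Type) (f g : form V) : Prop :=
  forall s : model V, sat s f -> sat s g.

Definition pmodel (V : Type) (Y : V -> Prop) := {v : V | Y v} -> bool.

Definition restr (V : Type) (Y : V -> Prop) (s : model V) : pmodel Y :=
  fun x => s (proj1_sig x).

Definition strict (T : Type) (le : T -> T -> Prop) (x y : T) : Prop :=
  le x y /\ x <> y.

Definition mu (T : Type) (le : T -> T -> Prop) (A : T -> Prop) : T -> Prop :=
  fun x => A x /\ ~ (exists x', A x' /\ strict le x' x).

Definition smooth (T : Type) (le : T -> T -> Prop) : Prop :=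
  forall (A : T -> Prop) (x : T), A x -> ~ mu le A x ->
    exists x', mu le A x' /\ strict le x' x.

Definition reflexive (T : Type) (le : T -> T -> Prop) : Prop := forall x, le x x.

Definition disjoint_cover (V : Type) (X1 X2 : V -> Prop) : Prop :=
  (forall v, X1 v \/ X2 v) /\ (forall v, ~ (X1 v /\ X2 v)).

(* The relation on (Pi V x Pi V) u (Pi X' x Pi X') u (Pi X'' x Pi X'') for all
   disjoint covers X', X'' is given by [leV] on total models together with a
   family [leP Y] on partial models over each subset Y. *)
Definition hamming (V : Type) (leV : model V -> model V -> Prop)
  (leP : forall Y : V -> Prop, pmodel Y -> pmodel Y -> Prop) : Prop :=
  reflexive leV /\ (forall Y, reflexive (leP Y)) /\
  forall X1 X2 : V -> Prop, disjoint_cover X1 X2 ->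
    forall s t : model V,
      leV s t <-> (leP X1 (restr X1 s) (restr X1 t) /\ leP X2 (restr X2 s) (restr X2 t)).

Definition nmcons (V : Type) (leV : model V -> model V -> Prop) (b g : form V) : Prop :=
  forall s, mu leV (Mod b) s -> Mod g s.

(* Main.v *)
Require Import Defs.
From Stdlib Require Import Classical ClassicalEpsilon FunctionalExtensionality List.

Section Aux.
Variable V : Type.

Definition dec (P : Prop) : {P} + {~P} := excluded_middle_informative P.

Definition upd (s : model V) (v : V) (b : bool) : model V :=
  fun w => if dec (w = v) then b else s w.

Fixpoint subst (v : V) (b : bool) (f : form V) : form V :=
  match f with
  | FVar w => if dec (w = v) then (if b then FTop else FBot) else FVar w
  | FTop => FTop
  | FBot => FBot
  | FNeg g => FNeg (subst v b g)
  | FAnd g h => FAnd (subst v b g) (subst v b h)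
  | FOr g h => FOr (subst v b g) (subst v b h)
  | FImp g h => FImp (subst v b g) (subst v b h)
  end.

Lemma sat_subst (s : model V) v b (f : form V) : sat s (subst v b f) <-> sat (upd s v b) f.
Proof.
  induction f; simpl; try tauto.
  unfold upd. destruct (dec (v0 = v)); [destruct b; simpl; intuition; discriminate|simpl; tauto].
Qed.

Lemma occ_subst (w v : V) b (f : form V) : occurs w (subst v b f) -> occurs w f /\ w <> v.
Proof.
  induction f; simpl; try tauto;
  try (intros [H|H]; [apply IHf1 in H|apply IHf2 in H]; tauto).
  destruct (dec (v0 = v)); [destruct b; simpl; tauto|simpl; intros ->; auto].
Qed.

Lemma coinc (s t : model V) (f : form V) : (forall v, occurs v f -> s v = t v) -> (sat s f <-> sat t f).
Proof.
  induction f; simpl; intros H; try tauto;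
  try (rewrite IHf1, IHf2 by auto; tauto); try (rewrite IHf by auto; tauto).
  rewrite H by reflexivity; tauto.
Qed.

Definition ex v f := FOr (subst v true f) (subst v false f).

Variable P : V -> Prop.

Definition step v f := if dec (P v) then ex v f else f.

Fixpoint elim (L : list V) f := match L with nil => f | v :: L' => step v (elim L' f) end.

Lemma elim_occ w L f : occurs w (elim L f) -> occurs w f /\ ~ (In w L /\ P w).
Proof.
  induction L; simpl; [tauto|].
  unfold step; destruct (dec (P a)).
  - simpl. intros H.
    assert (occurs w (elim L f) /\ w <> a) as [H1 H2]
      by (destruct H as [H|H]; apply occ_subst in H; tauto).
    apply IHL in H1. intuition.
  - intros H; apply IHL in H. intuition. subst; auto.
Qed.

Lemma elim_sat_fwd L f s : sat s (elim L f) ->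
  exists t, sat t f /\ forall w, ~ (In w L /\ P w) -> t w = s w.
Proof.
  revert s; induction L; simpl; intros s H.
  - exists s; auto.
  - unfold step in H; destruct (dec (P a)).
    + simpl in H. assert (exists b, sat (upd s a b) (elim L f)) as [b Hb]
        by (destruct H as [H|H]; apply sat_subst in H; eauto).
      apply IHL in Hb as [t [Ht1 Ht2]]. exists t; split; auto.
      intros w Hw. rewrite Ht2 by (intuition; subst; auto).
      unfold upd; destruct (dec (w = a)); [subst; tauto|auto].
    + apply IHL in H as [t [Ht1 Ht2]]. exists t; split; auto.
      intros w Hw; apply Ht2; intuition; subst; auto.
Qed.

Lemma elim_sat_bwd L f s : sat s f -> sat s (elim L f).
Proof.
  induction L; simpl; auto. intros H. unfold step. destruct (dec (P a)); auto.
  simpl. assert (E : forall v, s v = upd s a (s a) v).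
  { intros v; unfold upd; destruct (dec (v = a)); subst; auto. }
  assert (sat (upd s a (s a)) (elim L f)) by (apply (coinc s); auto).
  destruct (s a) eqn:Ea; [left|right]; apply sat_subst; auto.
Qed.

Fixpoint vars (f : form V) : list V :=
  match f with
  | FVar w => w :: nil
  | FTop | FBot => nil
  | FNeg g => vars g
  | FAnd g h | FOr g h | FImp g h => vars g ++ vars h
  end.

Lemma vars_in w f : occurs w f -> In w (vars f).
Proof.
  induction f; simpl; try tauto; intros H; try (apply in_or_app; tauto).
Qed.

End Aux.

Lemma restr_eq V (Y : V -> Prop) s t : (forall v, Y v -> s v = t v) -> restr Y s = restr Y t.
Proof. intros H. apply functional_extensionality. intros [x Hx]. unfold restr; simpl; auto. Qed.

Section Main.
Variables (V : Type) (leV : model V -> model V -> Prop)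
  (leP : forall Y : V -> Prop, pmodel Y -> pmodel Y -> Prop).
Hypothesis HH : hamming leV leP.

Lemma le_of (X1 X2 : V -> Prop) (s t : model V) : disjoint_cover X1 X2 -> (forall v, X2 v -> s v = t v) ->
  leP X1 (restr X1 s) (restr X1 t) -> leV s t.
Proof.
  intros Hc Ha Hl. destruct HH as [_ [Hr Hm]]. apply (Hm X1 X2 Hc). split; auto.
  rewrite (restr_eq V X2 s t Ha). apply Hr.
Qed.

Lemma le_proj (X1 X2 : V -> Prop) (s t : model V) : disjoint_cover X1 X2 -> leV s t -> leP X1 (restr X1 s) (restr X1 t).
Proof. intros Hc Hl. destruct HH as [_ [_ Hm]]. apply (Hm X1 X2 Hc) in Hl. tauto. Qed.

Lemma cover_c (X : V -> Prop) : disjoint_cover X (fun v => ~ X v).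
Proof. split; intros v; tauto. Qed.
Lemma cover_c' (X : V -> Prop) : disjoint_cover (fun v => ~ X v) X.
Proof. split; intros v; tauto. Qed.

End Main.
Arguments le_of {V leV leP} HH {X1 X2 s t}.
Arguments le_proj {V leV leP} HH {X1 X2 s t}.
Arguments cover_c {V}.
Arguments cover_c' {V}.

Theorem corollary4p11 (V : Type) (leV : model V -> model V -> Prop)
  (leP : forall Y : V -> Prop, pmodel Y -> pmodel Y -> Prop) :
  hamming leV leP ->
  smooth leV ->
  (forall Y : V -> Prop, smooth (leP Y)) ->
  forall phi psi : form V, nmcons leV phi psi ->
    exists alpha : form V,
      (forall v, occurs v alpha -> occurs v phi /\ occurs v psi) /\
      entails phi alpha /\ nmcons leV alpha psi.
Proof.
  intros HH Hsm _ phi psi Hnm.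
  set (Pe := fun w => ~ occurs w psi).
  set (alpha := elim V Pe (vars V phi) phi).
  set (J := fun w => occurs w phi /\ occurs w psi).
  assert (Hocc : forall v, occurs v alpha -> J v).
  { intros v Hv. apply (elim_occ V) in Hv as [H1 H2]. split; auto.
    apply NNPP; intro H3; apply H2; split; auto; apply (vars_in V); auto. }
  assert (Hent : entails phi alpha) by (intros s Hs; apply (elim_sat_bwd V); auto).
  exists alpha; split; [exact Hocc|split; [exact Hent|]].
  intros s [Hs Hmin].
  assert (Hrefl : forall x, leV x x) by (destruct HH; auto).
  assert (Mn : forall z, Mod alpha z -> leV z s -> z = s).
  { intros z Hz Hl. apply NNPP; intro Hne. apply Hmin. exists z; split; auto. split; auto. }
  assert (AgJ : forall z, (forall v, J v -> z v = s v) -> Mod alpha z).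
  { intros z Hz. unfold Mod. apply (coinc V z s); auto. }
  apply (elim_sat_fwd V) in Hs as [t [Ht1 Ht2]].
  set (X1 := fun w => occurs w phi).
  set (x0 := fun w => if dec (X1 w) then t w else s w).
  set (F := fun x => sat x phi /\ forall w, ~ X1 w -> x w = s w).
  assert (Fx0 : F x0).
  { split.
    - apply (coinc V x0 t); auto. intros v Hv; unfold x0; destruct (dec (X1 v)); tauto.
    - intros w Hw; unfold x0; destruct (dec (X1 w)); tauto. }
  assert (Hx0J : forall w, J w -> x0 w = s w).
  { intros w [H1 H2]. unfold x0; destruct (dec (X1 w)); auto. apply Ht2. intros [_ H]; auto. }
  assert (exists x', mu leV F x' /\ leV x' x0) as [x' [Hx' Hle]].
  { destruct (classic (mu leV F x0)) as [Hm|Hm]; [exists x0; auto|].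
    destruct (Hsm F x0 Fx0 Hm) as [x' [H1 [H2 _]]]; eauto. }
  assert (HxJ : forall w, J w -> x' w = s w).
  { set (z := fun w => if dec (J w) then x' w else s w).
    assert (Hz : z = s).
    { apply Mn.
      - unfold Mod. apply (coinc V z x').
        + intros v Hv; unfold z; destruct (dec (J v)); auto. exfalso; auto.
        + apply Hent. destruct Hx' as [[H _] _]; auto.
      - apply (le_of HH (cover_c J)).
        + intros v Hv; unfold z; destruct (dec (J v)); tauto.
        + rewrite (restr_eq V J z x') by (intros v Hv; unfold z; destruct (dec (J v)); tauto).
          rewrite <- (restr_eq V J x0 s Hx0J). apply (le_proj HH (cover_c J)); auto. }
    intros w Hw. rewrite <- Hz. unfold z; destruct (dec (J w)); tauto. }
  destruct Hx' as [[Fx'1 Fx'2] Hx'm].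
  assert (Hmu : mu leV (Mod phi) x').
  { split; [exact Fx'1|]. intros [y [Hy [Hyl Hyn]]].
    set (y' := fun w => if dec (X1 w) then y w else x' w).
    assert (Hy' : y' = x').
    { apply NNPP; intro Hne. apply Hx'm. exists y'. split; [split|split; auto].
      - apply (coinc V y' y); auto. intros v Hv; unfold y'; destruct (dec (X1 v)); tauto.
      - intros w Hw; unfold y'; destruct (dec (X1 w)); [tauto|auto].
      - apply (le_of HH (cover_c X1)).
        + intros v Hv; unfold y'; destruct (dec (X1 v)); tauto.
        + rewrite (restr_eq V X1 y' y) by (intros v Hv; unfold y'; destruct (dec (X1 v)); tauto).
          apply (le_proj HH (cover_c X1)); auto. }
    set (y'' := fun w => if dec (X1 w) then s w else y w).
    assert (Hy'' : y'' = s).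
    { apply Mn.
      - apply AgJ. intros v [Hv _]; unfold y''; destruct (dec (X1 v)); tauto.
      - apply (le_of HH (cover_c' X1)).
        + intros v Hv; unfold y''; destruct (dec (X1 v)); tauto.
        + rewrite (restr_eq V (fun v => ~ X1 v) y'' y)
            by (intros v Hv; unfold y''; destruct (dec (X1 v)); tauto).
          rewrite <- (restr_eq V (fun v => ~ X1 v) x' s Fx'2).
          apply (le_proj HH (cover_c' X1)); auto. }
    apply Hyn. apply functional_extensionality. intros w.
    destruct (classic (X1 w)) as [Hw|Hw].
    - rewrite <- Hy'. unfold y'; destruct (dec (X1 w)); tauto.
    - rewrite Fx'2 by auto. rewrite <- Hy''. unfold y''; destruct (dec (X1 w)); tauto. }
  apply Hnm in Hmu. unfold Mod in *. apply (coinc V s x'); auto.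
  intros v Hv. destruct (classic (X1 v)) as [H|H].
  - symmetry; apply HxJ; split; auto.
  - symmetry; apply Fx'2; auto.
Qed.
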